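(* For every integer $k\ge2$ there is no integer $m\ge3$ with $S_{\mathbb{R}}(m-1,k)=m^k$; equivalently, $F_k(m)\neq0$ for all integers $k\ge2$ and $m\ge3$.
   Context: For an integer $k\ge1$ and real $m$, define $S_{\mathbb{R}}(m-1,k)=\dfrac{(m-1)^{k+1}-1}{k+1}+\dfrac{1+(m-1)^k}{2}$ (the Euler–MacLaurin approximation of $\sum_{i=1}^{m-1}i^k$ with all Bernoulli correction terms omitted), and $F_k(m)=2(k+1)\big(S_{\mathbb{R}}(m-1,k)-m^k\big)=2(m-1)^{k+1}+(k+1)(m-1)^k-2(k+1)m^k+(k-1)$. *)

(* Defs.v *)
From Stdlib Require Import Reals.
Open Scope R_scope.

(* S_R(m-1,k) = ((m-1)^(k+1) - 1)/(k+1) + (1 + (m-1)^k)/2, for real m, nat k. *)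
Definition S_R (m : R) (k : nat) : R :=
  ((m - 1) ^ (k + 1) - 1) / INR (k + 1) + (1 + (m - 1) ^ k) / 2.

(* Main.v *)
Require Import Defs.
From Stdlib Require Import Reals ZArith.
From Stdlib Require Import Arith Lia NArith Lra.
Open Scope R_scope.

Lemma binom_mod (n k : nat) : exists q, ((n+1)^k = 1 + n*q)%nat.
Proof.
  induction k as [|k [q Hq]].
  - exists 0%nat. simpl. lia.
  - exists (q + (1 + n*q))%nat. rewrite Nat.pow_succ_r'. rewrite Hq. nia.
Qed.

Lemma bern (n k : nat) : (n^k*(n+k) <= n*(n+1)^k)%nat.
Proof.
  induction k as [|k IH].
  - simpl. lia.
  - rewrite !Nat.pow_succ_r'.
    assert (n^k*(n+k)*(n+1) <= n*(n+1)^k*(n+1))%nat by nia.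
    nia.
Qed.

Lemma two_pow (j : nat) : (j + 1 <= 2^j)%nat.
Proof. induction j; simpl; lia. Qed.

Ltac closed_false H :=
  apply (f_equal N.of_nat) in H;
  rewrite ?Nat2N.inj_add, ?Nat2N.inj_mul, ?Nat2N.inj_pow in H;
  vm_compute in H; discriminate.

Lemma aux1 k n R q : (2*(n*(n*R)) + (k+1)*(n*R) + k = 2*(k+1)*(1+n*q)+1)%nat ->
 (n*(2*(n*R) + (k+1)*R) = k + 3 + n*(2*(k+1)*q))%nat.
Proof. intros. nia. Qed.

Lemma aux2 k n A B : (2<=n)%nat -> (n*A = k + 3 + n*B)%nat -> (n <= k+3)%nat.
Proof. intros. destruct (Nat.le_gt_cases A B); nia. Qed.

Lemma aux3 k n P Q : (2<=n)%nat -> (2*(n*P) + (k+1)*P + k = 2*(k+1)*Q + 1)%nat ->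
 (P*(n+k) <= n*Q)%nat -> (1 + 2*n*n + (k+1)*n <= 2*(k+1)*(n+k))%nat -> (n*k <= P)%nat -> False.
Proof.
intros Hn E B D HP.
assert (E2 : (n*(2*(n*P) + (k+1)*P + k) = 2*(k+1)*(n*Q) + n)%nat) by nia.
assert (P*(1 + 2*n*n + (k+1)*n) <= P*(2*(k+1)*(n+k)))%nat by (apply Nat.mul_le_mono_l; exact D).
nia. Qed.

Lemma aux4 k n : (8<=k)%nat -> (2<=n)%nat -> (n <= k+3)%nat -> (1 + 2*n*n + (k+1)*n <= 2*(k+1)*(n+k))%nat.
Proof. intros. nia. Qed.

Lemma core (k n : nat) : (2 <= k)%nat -> (2 <= n)%nat ->
  (2*n^(k+1) + (k+1)*n^k + k <> 2*(k+1)*(n+1)^k + 1)%nat.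
Proof.
  intros Hk Hn E.
  destruct (binom_mod n k) as [q Hq].
  assert (Hnk : (n^k = n * n^(k-1))%nat).
  { replace k with (S (k-1)) at 1 by lia. apply Nat.pow_succ_r'. }
  assert (Hnk1 : (n^(k+1) = n * n^k)%nat).
  { rewrite Nat.add_1_r. apply Nat.pow_succ_r'. }
  assert (Hdiv : (n <= k+3)%nat).
  { pose proof E as E0. rewrite Hq, Hnk1, Hnk in E0.
    apply aux1 in E0. exact (aux2 _ _ _ _ Hn E0). }
  destruct (Nat.le_gt_cases 8 k) as [Hk8|Hk8].
  - pose proof (bern n k) as B.
    assert (P1 : (k <= n^(k-1))%nat).
    { pose proof (two_pow (k-1)).
      assert (2^(k-1) <= n^(k-1))%nat by (apply Nat.pow_le_mono_l; lia). lia. }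
    assert (HP : (n*k <= n^k)%nat) by (rewrite Hnk; apply Nat.mul_le_mono_l; exact P1).
    rewrite Hnk1 in E.
    exact (aux3 k n (n^k) ((n+1)^k) Hn E B (aux4 k n Hk8 Hn Hdiv) HP).
  - assert (k = 2 \/ k = 3 \/ k = 4 \/ k = 5 \/ k = 6 \/ k = 7)%nat as Hc by lia.
    clear Hq Hnk Hnk1 q.
    destruct Hc as [-> | [-> | [-> | [-> | [-> | ->]]]]];
    (assert (n = 2 \/ n = 3 \/ n = 4 \/ n = 5 \/ n = 6 \/ n = 7 \/ n = 8 \/ n = 9 \/ n = 10)%nat as Hc by lia);
    destruct Hc as [-> | [-> | [-> | [-> | [-> | [-> | [-> | [-> | ->]]]]]]]]; closed_false E.
Qed.

Theorem mainTheorem12 :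
  forall (k : nat) (m : Z), (2 <= k)%nat -> (3 <= m)%Z ->
    S_R (IZR m) k <> (IZR m) ^ k.
Proof.
  intros k m Hk Hm H.
  set (n := Z.to_nat (m - 1)).
  assert (Hmn : IZR m = INR n + 1).
  { unfold n. rewrite INR_IZR_INZ, Z2Nat.id by lia. rewrite minus_IZR. simpl. ring. }
  assert (Hn : (2 <= n)%nat) by (unfold n; lia).
  apply (core k n Hk Hn).
  apply INR_eq.
  unfold S_R in H. rewrite Hmn in H.
  replace (INR n + 1 - 1) with (INR n) in H by ring.
  assert (Hk1 : INR (k+1) <> 0) by (apply not_0_INR; lia).
  rewrite !plus_INR, !mult_INR, !pow_INR, plus_INR.
  rewrite plus_INR in Hk1.
  rewrite plus_INR in H.
  simpl (INR 1); simpl (INR 2).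
  assert (H2 : ((INR n)^(k+1) - 1) * 2 + (1 + INR n ^ k) * (INR k + 1) = 2 * (INR k + 1) * (INR n + 1)^k).
  { change (INR 1) with 1 in H, Hk1. rewrite <- H. field. exact Hk1. }
  rewrite plus_INR. change (INR 1) with 1.
  lra.
Qed.
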